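(* Let $G$ be a countable amenable group and fix $A\subset G$. Suppose there exist a two-sided Følner sequence $\Phi$ on $G$ and a non-principal ultrafilter $\mathfrak{p}$ on $G$ such that $\mathsf{d}_\Phi(Ag^{-1}\cap A\mathfrak{p}^{-1})$ exists for all $g\in G$ and $$\lim_{g\to\mathfrak{p}}\mathsf{d}_\Phi(Ag^{-1}\cap A\mathfrak{p}^{-1})>0.$$ Then there exist infinite sets $B,C\subset G$ such that $BC\subset A$.
   Context: A two-sided Følner sequence on $G$ is a sequence $\Phi\colon N\mapsto\Phi_N$ of finite non-empty subsets of $G$ with $|(\Phi_Ng)\triangle\Phi_N|/|\Phi_N|\to0$ and $|\Phi_N\triangle(g\Phi_N)|/|\Phi_N|\to0$ for all $g\in G$. $\mathsf{d}_\Phi(E)=\lim_N|E\cap\Phi_N|/|\Phi_N|$ when it exists. For $g\in G$, $Ag^{-1}=\{h\in G: hg\in A\}$ and $g^{-1}A=\{h\in G: gh\in A\}$; for an ultrafilter $\mathfrak{p}$ on $G$, $A\mathfrak{p}^{-1}=\{g\in G: g^{-1}A\in\mathfrak{p}\}$. $\lim_{g\to\mathfrak{p}}$ denotes the ultrafilter limit of a bounded real-valued function on $G$. $BC=\{bc:b\in B,c\in C\}$. *)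

(* Defs.v *)
From HB Require Import structures.
From mathcomp Require Import all_boot all_order all_algebra.
From mathcomp Require Import finmap.
From mathcomp Require Import all_classical all_reals all_analysis.
From mathcomp Require Import Rstruct Rstruct_topology.
From Stdlib Require Import Reals.

Set Implicit Arguments.
Unset Strict Implicit.
Unset Printing Implicit Defensive.

Import Order.TTheory GRing.Theory Num.Theory.
Local Open Scope classical_set_scope.
Local Open Scope ring_scope.

Section Defs.
Variable G : groupType.
Local Open Scope group_scope.

Definition frtrans (F : {fset G}) (g : G) : {fset G} := [fset (x * g)%g | x in F]%fset.
Definition fltrans (g : G) (F : {fset G}) : {fset G} := [fset (g * x)%g | x in F]%fset.

Definition fsymdiff (X Y : {fset G}) : {fset G} := ((X `\` Y) `|` (Y `\` X))%fset.

Definition fratio (X Y : {fset G}) : R := ((#|` X|)%:R / (#|` Y|)%:R)%R.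

Definition two_sided_folner (Phi : nat -> {fset G}) : Prop :=
  (forall N, Phi N != fset0) /\
  (forall g : G,
     (fun N => fratio (fsymdiff (frtrans (Phi N) g) (Phi N)) (Phi N)) @ \oo --> (0 : R)) /\
  (forall g : G,
     (fun N => fratio (fsymdiff (Phi N) (fltrans g (Phi N))) (Phi N)) @ \oo --> (0 : R)).

(* (left) Følner sequence; for countable groups amenability is the existence of one *)
Definition left_folner (Phi : nat -> {fset G}) : Prop :=
  (forall N, Phi N != fset0) /\
  (forall g : G,
     (fun N => fratio (fsymdiff (Phi N) (fltrans g (Phi N))) (Phi N)) @ \oo --> (0 : R)).

Definition amenable : Prop := exists Phi, left_folner Phi.

Definition dens_seq (Phi : nat -> {fset G}) (E : set G) (N : nat) : R :=
  fratio [fset x in Phi N | `[< E x >] ]%fset (Phi N).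

Definition density_exists (Phi : nat -> {fset G}) (E : set G) : Prop :=
  cvgn (dens_seq Phi E).
Definition density (Phi : nat -> {fset G}) (E : set G) : R :=
  limn (dens_seq Phi E).

Definition rdiv (A : set G) (g : G) : set G := [set h | A (h * g)].
(* A p^{-1} = {g | g^{-1} A ∈ p},  g^{-1} A = {h | g h ∈ A} *)
Definition ultra_rdiv (A : set G) (p : set_system G) : set G :=
  [set g | p [set h | A (g * h)]].

Definition nonprincipal (p : set_system G) : Prop := forall g : G, ~ p [set g].

End Defs.

(* Main.v *)
Require Import Defs.
From HB Require Import structures.
From mathcomp Require Import all_boot all_order all_algebra.
From mathcomp Require Import finmap.
From mathcomp Require Import all_classical all_reals all_analysis.
From mathcomp Require Import Rstruct Rstruct_topology.
From Stdlib Require Import Reals.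
From mathcomp Require Import ring lra zify.
Import Order.TTheory GRing.Theory Num.Theory.
Local Open Scope classical_set_scope.
Local Open Scope ring_scope.
Set Implicit Arguments.
Unset Strict Implicit.
Section Dens.
Variable G : groupType.
Variable Phi : nat -> {fset G}.
Hypothesis Phi0 : forall N, Phi N != fset0.

Definition sub (E : set G) N := [fset x in Phi N | `[< E x >] ]%fset.

Lemma card_Phi_gt0 N : (0 < #|` Phi N|)%nat.
Proof. by rewrite cardfs_gt0. Qed.

Lemma subS E F N : E `<=` F -> (#|` sub E N| <= #|` sub F N|)%nat.
Proof.
move=> EF; apply: fsubset_leq_card; apply/fsubsetP => x.
rewrite !inE /= => /andP[-> /asboolP Ex]; apply/asboolP; exact: EF.
Qed.

Lemma densS E F N : E `<=` F -> dens_seq Phi E N <= dens_seq Phi F N.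
Proof.
move=> EF; rewrite /dens_seq /fratio ler_pM2r ?ler_nat ?subS //.
by rewrite invr_gt0 ltr0n card_Phi_gt0.
Qed.

Lemma dens_ge0 E N : 0 <= dens_seq Phi E N.
Proof. by rewrite /dens_seq /fratio divr_ge0. Qed.

Lemma dens_le1 E N : dens_seq Phi E N <= 1.
Proof.
rewrite /dens_seq /fratio ler_pdivrMr ?mul1r ?ltr0n ?card_Phi_gt0 // ler_nat.
apply: fsubset_leq_card; apply/fsubsetP => x; rewrite !inE /= => /andP[]//.
Qed.

Lemma densUI E F N : dens_seq Phi (E `|` F) N + dens_seq Phi (E `&` F) N =
  dens_seq Phi E N + dens_seq Phi F N.
Proof.
rewrite /dens_seq /fratio -!mulrDl -!natrD; congr (_%:R / _).
rewrite -/(sub _ N) -/(sub _ N) -/(sub E N) -/(sub F N).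
have -> : sub (E `|` F) N = (sub E N `|` sub F N)%fset.
  apply/fsetP => x; rewrite !inE; case: (x \in Phi N) => //=.
  by apply/asboolP/orP => [[]|[]] /asboolP; auto.
have -> : sub (E `&` F) N = (sub E N `&` sub F N)%fset.
  apply/fsetP => x; rewrite !inE; case: (x \in Phi N) => //=.
  by apply/asboolP/andP => [[] /asboolP -> /asboolP ->|[] /asboolP ? /asboolP ?].
exact: cardfsUI.
Qed.

Lemma densU E F N : dens_seq Phi (E `|` F) N <= dens_seq Phi E N + dens_seq Phi F N.
Proof. by rewrite -densUI lerDl dens_ge0. Qed.
End Dens.

Lemma filter_seq (T : Type) (F : set_system T) {FF : Filter F} (I : eqType)
  (s : seq I) (P : I -> set T) :
  (forall i, i \in s -> F (P i)) -> F [set x | forall i, i \in s -> P i x].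
Proof.
elim: s => [|i s IH] H.
  by apply: filterE => x i; rewrite in_nil.
have Hs : forall j, j \in s -> F (P j).
  by move=> j js; apply: H; rewrite in_cons js orbT.
have FI := @filterI _ _ FF _ _ (H i (mem_head _ _)) (IH Hs).
apply: (filterS _ FI).
move=> x [Pi Ps] j; rewrite in_cons.
by case/orP => [/eqP->|/Ps].
Qed.

Lemma ultra_not (T : Type) (F : set_system T) (FU : UltraFilter F) (P : set T) :
  ~ F P -> F (~` P).
Proof. by move=> nP; case: (in_ultra_setVsetC P FU). Qed.

Section Main.
Variable G : groupType.
Variable A : set G.
Variable Phi : nat -> {fset G}.
Hypothesis Phi0 : forall N, Phi N != fset0.
Variable p : set_system G.
Hypothesis pU : UltraFilter p.
Hypothesis pnp : nonprincipal p.
Variable q : set_system nat.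
Hypothesis qU : UltraFilter q.
Hypothesis qoo : forall P : set nat, (\forall n \near \oo, P n) -> q P.
Hypothesis Hbig : forall r : R, q [set N | r < (#|` Phi N|)%:R].

Let pF : Filter p. Proof. exact: _. Qed.
Let qF : Filter q. Proof. exact: _. Qed.
Lemma pS (P Q : set G) : (forall x, P x -> Q x) -> p P -> p Q.
Proof. by move=> PQ; apply: filterS. Qed.
Lemma qS (P Q : set nat) : (forall x, P x -> Q x) -> q P -> q Q.
Proof. by move=> PQ; apply: filterS. Qed.
Lemma pI (P Q : set G) : p P -> p Q -> p (P `&` Q).
Proof. exact: filterI. Qed.
Lemma qI (P Q : set nat) : q P -> q Q -> q (P `&` Q).
Proof. exact: filterI. Qed.
Lemma pE (P : set G) : p P -> exists x, P x.
Proof. exact: filter_ex. Qed.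
Lemma qE (P : set nat) : q P -> exists x, P x.
Proof. exact: filter_ex. Qed.
Let D := ultra_rdiv A p.
Let S g := rdiv A g `&` D.
Let dens E N := dens_seq Phi E N.

Definition II (X : set G) := exists2 d : R, 0 < d &
  p [set g | q [set N | d < dens (X `&` S g) N]].

Lemma IImono X Y : X `<=` Y -> II X -> II Y.
Proof.
move=> XY [d d0 Pd]; exists d => //; apply: filterS Pd => g /=.
apply: filterS => N /= /lt_le_trans; apply; apply: densS => //.
by move=> x [/XY ? ?].
Qed.

Lemma dens0 N : dens set0 N = 0.
Proof.
apply/eqP; rewrite eq_le dens_ge0 andbT.
rewrite /dens /dens_seq /fratio.
have -> : [fset x in Phi N | `[< set0 x >]]%fset = fset0.
  by apply/fsetP => x; rewrite !inE; case: (x \in Phi N) => //=; apply/asboolP.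
by rewrite RdivE cardfs0 mul0r.
Qed.


Lemma union_bound X h gs e N :
  (forall g, g \in gs -> dens (X `&` S g `&` S h) N <= e) ->
  dens ((X `&` [set x | exists2 g, g \in gs & S g x]) `&` (X `&` S h)) N
    <= (size gs)%:R * e.
Proof.
elim: gs => [|g gs IH] H.
  have -> : (X `&` [set x | exists2 g, g \in [::] & S g x]) `&` (X `&` S h) = set0.
    by apply/seteqP; split => x // [[_ [g]]]; rewrite in_nil.
  by rewrite dens0 mul0r.
apply: le_trans (densS Phi0 (F := (X `&` S g `&` S h) `|`
   ((X `&` [set x | exists2 g, g \in gs & S g x]) `&` (X `&` S h))) N _) _.
  move=> x [[Xx [g' g'in Sg'x]] [_ Shx]]; move: g'in; rewrite in_cons.
  case/orP => [/eqP eg|g'in]; first by left; rewrite -eg.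
  by right; split => //; split => //; exists g'.
apply: le_trans (densU _ _ _ _) _.
rewrite /= -add1n natrD mulrDl mul1r; apply: lerD; first exact: H (mem_head _ _).
by apply: IH => g' g'in; apply: H; rewrite in_cons g'in orbT.
Qed.

Lemma key X Q : II X -> p Q -> exists c, Q c /\ II (X `&` S c).
Proof.
move=> [d d0 Pd] pQ; apply: contrapT => H.
have Hn : forall c, Q c -> forall e : R, 0 < e ->
    p [set g | q [set N | dens (X `&` S c `&` S g) N <= e]].
  move=> c Qc e e0.
  set U := [set g | q [set N | e < dens (X `&` S c `&` S g) N]].
  have nU : ~ p U by move=> pU'; apply: H; exists c; split => //; exists e.
  apply: pS (ultra_not pU nU) => g /= nq.
  apply: qS (ultra_not qU nq) => N /= /negP; by rewrite -leNgt.
have [n nd] : exists n : nat, 2 < n%:R * d.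
  exists (Num.bound (2 / d)); rewrite -ltr_pdivrMr //; apply: archi_boundP.
  by rewrite divr_ge0 // ltW.
have n0 : n%:R != 0 :> R.
  by apply: contraTneq nd => ->; rewrite mul0r ltNge ler0n.
set e := @GRing.inv R (2%:R * n%:R ^+ 2).
have e0 : 0 < e.
  by rewrite /e invr_gt0 mulr_gt0 // exprn_gt0 // lt0r n0 ler0n.
have ne : n%:R ^+ 2 * e = 2%:R^-1 by rewrite /e; field; rewrite n0.
have claim : forall k : nat, exists gs : seq G, [/\ size gs = k,
    (forall g, g \in gs -> Q g) &
    q [set N | k%:R * d - k%:R ^+ 2 * e <=
               dens (X `&` [set x | exists2 g, g \in gs & S g x]) N]].
  elim => [|k [gs [sz Qgs qgs]]].
    exists [::]; split => //; apply: filterE => N.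
    by rewrite !mul0r expr0n /= mul0r subr0 dens_ge0.
  have Hgs := filter_seq (FF := pF) (s := gs)
    (P := fun g => [set h | q [set N | dens (X `&` S g `&` S h) N <= e]])
    (fun g gin => Hn g (Qgs g gin) e e0).
  have pR : p [set h | [/\ Q h, q [set N | d < dens (X `&` S h) N] &
      forall g, g \in gs -> q [set N | dens (X `&` S g `&` S h) N <= e]]].
    by have := pI pQ (pI Pd Hgs); apply: pS => h [Qh [Ph Hh]]; split.
  have [h [Qh qh Hh]] := pE pR.
  exists (h :: gs); split => /=; first by rewrite sz.
    by move=> g; rewrite in_cons => /orP[/eqP->|/Qgs].
  have Hq := filter_seq (FF := qF) (s := gs)
    (P := fun g => [set N | dens (X `&` S g `&` S h) N <= e]) Hh.
  have := qI qgs (qI qh Hq); apply: qS => N [H1 [H2 H3]].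
  have ub := union_bound H3.
  rewrite sz in ub.
  set U := X `&` [set x | exists2 g, g \in gs & S g x] in H1 ub *.
  have sU : U `|` (X `&` S h) `<=`
      X `&` [set x | exists2 g, g \in h :: gs & S g x].
    move=> x [[Xx [g gin Sx]]|[Xx Sx]]; split => //.
      by exists g => //; rewrite in_cons gin orbT.
    by exists h => //; rewrite mem_head.
  have := densS Phi0 N sU.
  have := densUI Phi U (X `&` S h) N.
  rewrite -natr1.
  have k0 : 0 <= k%:R :> R by rewrite ler0n.
  rewrite /dens in H1 H2 ub *.
  move=> Ha Hb.
  have E2 : (k%:R + 1) ^+ 2 * e = k%:R ^+ 2 * e + k%:R * e + (k%:R * e + e) by ring.
  have hke : 0 <= k%:R * e + e by rewrite addr_ge0 ?mulr_ge0 // ltW.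
  rewrite /= in H1 H2 *; rewrite E2; lra.
have [gs [_ _ qn]] := claim n.
have [N HN] := qE qn.
have := dens_le1 Phi0 (X `&` [set x | exists2 g, g \in gs & S g x]) N.
rewrite /dens /= in HN; move: HN; rewrite ne => HN H1.
have h2 : @GRing.inv R 2%:R <= 1.
  by rewrite invr_le1 //; lra.
lra.
Qed.

Lemma densF (F : seq G) N :
  dens [set x | x \in F] N <= (size F)%:R / (#|` Phi N|)%:R.
Proof.
rewrite /dens /dens_seq /fratio RdivE ler_pM2r; last first.
  by rewrite invr_gt0 ltr0n card_Phi_gt0.
rewrite ler_nat; apply: (@leq_trans #|` [fset x in F]%fset|).
  apply: fsubset_leq_card; apply/fsubsetP => x; rewrite !inE /=.
  by case/andP => _ /asboolP.
by rewrite card_fseq size_undup.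
Qed.

Lemma avoid X (F : seq G) : II X -> exists b, X b /\ b \notin F.
Proof.
move=> [d d0 Pd]; have [g qg] := pE Pd.
have [N [H1 H2]] := qE (qI qg (Hbig ((size F)%:R / d))).
apply: contrapT => nb.
have sub : X `&` S g `<=` [set x | x \in F].
  move=> x [Xx _] /=; apply: contrapT => /negP xF; apply: nb; by exists x.
have := le_trans (densS Phi0 N sub) (densF F N).
rewrite /= in H1 H2.
have c0 : 0 < (#|` Phi N|)%:R :> R.
  by rewrite ltr0n card_Phi_gt0.
move: H2; rewrite ltr_pdivrMr // => H2 H3.
have := lt_le_trans H1 H3; rewrite ltr_pdivlMr // => H4.
lra.
Qed.

Let Xc (cs : seq G) := [set x | D x /\ forall c, c \in cs -> A (x * c)%g].

Definition Inv (s : seq G * seq G) := [/\ uniq s.1, uniq s.2,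
  (forall b c, b \in s.1 -> c \in s.2 -> A (b * c)%g),
  (forall b, b \in s.1 -> D b) & II (Xc s.2)].

Lemma step s : Inv s -> exists bc : G * G,
  [/\ bc.1 \notin s.1, bc.2 \notin s.2 & Inv (bc.1 :: s.1, bc.2 :: s.2)].
Proof.
case: s => bs cs [ub uc Hbc HD HI] /=.
set Q := [set c | c \notin cs /\ forall b, b \in bs -> A (b * c)%g].
have pQ : p Q.
  have h1 := filter_seq (FF := pF) (s := cs) (P := fun c0 => ~` [set c0])
    (fun c0 _ => ultra_not pU (@pnp c0)).
  have h2 := filter_seq (FF := pF) (s := bs) (P := fun b => [set c | A (b * c)%g])
    (fun b bin => HD b bin).
  have := pI h1 h2; apply: pS => c [H1 H2]; split => //.
  by apply/negP => cin; exact: (H1 c cin).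
have [c [[ncs Qc] Ic]] := key HI pQ.
have Ic' : II (Xc (c :: cs)).
  apply: IImono Ic => x [[Dx Hx] [Ax _]]; split => // c'.
  by rewrite in_cons => /orP[/eqP->|/Hx].
have [b [[Db Hb] nbs]] := avoid bs Ic'.
exists (b, c); split => //=; split => //=.
- by rewrite nbs ub.
- by rewrite ncs uc.
- move=> b' c'; rewrite !in_cons => /orP[/eqP->|b'in] /orP[/eqP->|c'in].
  + by apply: Hb; rewrite mem_head.
  + by apply: Hb; rewrite in_cons c'in orbT.
  + exact: Qc.
  + exact: Hbc.
- by move=> b'; rewrite in_cons => /orP[/eqP->|/HD].
Qed.

Definition next (s : seq G * seq G) : G * G :=
  match pselect (exists bc : G * G, [/\ bc.1 \notin s.1, bc.2 \notin s.2 &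
                   Inv (bc.1 :: s.1, bc.2 :: s.2)]) with
  | left H => projT1 (cid H)
  | right _ => (1%g, 1%g)
  end.

Fixpoint st n : seq G * seq G := match n with
  | 0 => ([::], [::])
  | n'.+1 => ((next (st n')).1 :: (st n').1, (next (st n')).2 :: (st n').2)
  end.

Lemma next_spec s : Inv s -> [/\ (next s).1 \notin s.1, (next s).2 \notin s.2 &
  Inv ((next s).1 :: s.1, (next s).2 :: s.2)].
Proof.
move=> Is; rewrite /next; case: pselect => [H|[]]; last exact: step.
by case: (cid H).
Qed.

Lemma st_inv : II (Xc [::]) -> forall n, Inv (st n).
Proof.
move=> I0; elim => [|n IH] /=.
  by split => // b c; rewrite in_nil.
by case: (next_spec IH).
Qed.

Lemma st_size n : size (st n).1 = n /\ size (st n).2 = n.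
Proof. by elim: n => [|n [IH1 IH2]] //=; rewrite IH1 IH2. Qed.

Lemma st_mono m n : (m <= n)%nat ->
  {subset (st m).1 <= (st n).1} /\ {subset (st m).2 <= (st n).2}.
Proof.
elim: n => [|n IH]; first by rewrite leqn0 => /eqP->.
move=> Hm; have [->|/IH[H1 H2]] : m = n.+1 \/ (m <= n)%nat by lia.
  by split.

by split => x /= xin; rewrite in_cons ?H1 ?H2 ?orbT.
Qed.

Lemma final : II (Xc [::]) -> exists B C : set G,
    infinite_set B /\ infinite_set C /\
    [set (b * c)%g | b in B & c in C] `<=` A.
Proof.
move=> I0.
exists [set b | exists n, b \in (st n).1], [set c | exists n, c \in (st n).2].
split; [|split].
- apply/infinite_set_fsetP => n; exists [fset x in (st n).1]%fset.
    by move=> x /=; rewrite inE => xin; exists n.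
  have [u1 _ _ _ _] := st_inv I0 n.
  by rewrite card_fseq undup_id // (st_size n).1.
- apply/infinite_set_fsetP => n; exists [fset x in (st n).2]%fset.
    by move=> x /=; rewrite inE => xin; exists n.
  have [_ u2 _ _ _] := st_inv I0 n.
  by rewrite card_fseq undup_id // (st_size n).2.
- move=> z [b [i bi] [c [j cj] <-]].
  have [Hb _] := st_mono (leq_maxl i j).
  have [_ Hc] := st_mono (leq_maxr i j).
  have [_ _ Hbc _ _] := st_inv I0 (maxn i j).
  by apply: Hbc; [apply: Hb | apply: Hc].
Qed.

Lemma base (L : R) : (forall g, density_exists Phi (S g)) ->
  (fun g => density Phi (S g)) @ p --> L -> 0 < L -> II (Xc [::]).
Proof.
move=> Hex HL L0.
exists (L / 4); first by rewrite divr_gt0.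
have L2 : L / 2 < L by lra.
have := cvgr_gt (FF := pF) _ HL _ L2.
apply: pS => g /= Hg.
have L4 : L / 4 < limn (dens_seq Phi (S g)) by rewrite /density in Hg; lra.
have := cvgr_gt (FF := eventually_filter) _ (Hex g) _ L4.
move=> Hn; have := qoo Hn; apply: qS => N /= HN.
apply: lt_le_trans HN _; apply: densS => // x [Sx1 Sx2]; split => //; split => // c; rewrite in_nil.
Qed.

End Main.

Lemma fresh (G : groupType) (p : set_system G) (pU : UltraFilter p)
  (pnp : nonprincipal p) (T : {fset G}) : exists x, x \notin T.
Proof.
have pF : Filter p by exact: _.
have h := filter_seq (FF := pF) (s := enum_fset T) (P := fun c0 => ~` [set c0])
    (fun c0 _ => ultra_not pU (@pnp c0)).
have [x Hx] := filter_ex h.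
by exists x; apply/negP => xT; exact: (Hx x xT).
Qed.

Lemma fset_card (G : groupType) (p : set_system G) (pU : UltraFilter p)
  (pnp : nonprincipal p) (k : nat) : exists T : {fset G}, #|` T| = k.
Proof.
elim: k => [|k [T HT]]; first by exists fset0; rewrite cardfs0.
have [x xT] := fresh pU pnp T.
by exists (x |` T)%fset; rewrite cardfsU1 xT HT.
Qed.

Lemma Phi_big (G : groupType) (Phi : nat -> {fset G}) (p : set_system G)
  (pU : UltraFilter p) (pnp : nonprincipal p) (Phi0 : forall N, Phi N != fset0) :
  (forall g : G,
     (fun N => fratio (fsymdiff (frtrans (Phi N) g) (Phi N)) (Phi N)) @ \oo --> (0 : R)) ->
  forall r : R, \forall N \near \oo, r < (#|` Phi N|)%:R.
Proof.
move=> Hr' r.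
have Hr : forall g : G,
   (fun N => fratio (fsymdiff (frtrans (Phi N) g) (Phi N)) (Phi N)) @ \oo
     --> @GRing.zero R by move=> g; exact: Hr'.
set M := Num.bound `|r|.
have rM : r < M%:R.
  by apply: le_lt_trans (ler_norm r) _; apply: archi_boundP.
have [T HT] := fset_card pU pnp M.+1.
have eps0 : 0 < (M.+1)%:R^-1 :> R by rewrite invr_gt0 ltr0n.
have h := filter_seq (FF := eventually_filter) (s := enum_fset T)
  (P := fun t N => `|fratio (fsymdiff (frtrans (Phi N) t) (Phi N)) (Phi N)|
                   < (M.+1)%:R^-1)
  (fun t _ => @cvgr0_norm_lt R R^o nat _ eventually_filter _ (Hr t) _ eps0).
apply: filterS h => N /= Ht.
suff MN : (M < #|` Phi N|)%nat.
  by apply: lt_le_trans rM _; rewrite ler_nat ltnW.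
rewrite ltnNge; apply/negP => NM.
have [x xP] := fset0Pn _ (Phi0 N).
have sub : forall t, t \in T -> (x * t)%g \in Phi N.
  move=> t tT; have := Ht t tT.
  have c0 : 0 < (#|` Phi N|)%:R :> R by rewrite ltr0n cardfs_gt0.
  rewrite /fratio RdivE ger0_norm ?divr_ge0 // ltr_pdivrMr // => H.
  have H2 : (M.+1)%:R^-1 * (#|` Phi N|)%:R < 1 :> R.
    rewrite ltr_pdivrMl ?ltr0n // mulr1 ltr_nat ltnS //.
  have := lt_trans H H2; rewrite ltrn1 ltnS leqn0 cardfs_eq0 fsetU_eq0.
  case/andP => /eqP H3 _.
  have : (x * t)%g \in frtrans (Phi N) t by apply: in_imfset.
  move: H3 => /eqP; rewrite fsetD_eq0 => /fsubsetP; apply.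
have : ([fset (x * t)%g | t in T] `<=` Phi N)%fset.
  by apply/fsubsetP => y /imfsetP [t tT ->]; apply: sub.
move/fsubset_leq_card; rewrite card_imfset; last exact: mulgI.
move=> H; move: (leq_trans H NM); rewrite (_ : size _ = M.+1) ?ltnn // -HT.
Qed.

Unset Implicit Arguments.
Set Strict Implicit.

Theorem theorem5p2 (G : groupType) (A : set G) :
  countable [set: G] ->
  amenable G ->
  (exists (Phi : nat -> {fset G}) (p : set_system G),
     two_sided_folner Phi /\ UltraFilter p /\ nonprincipal p /\
     (forall g : G, density_exists Phi (rdiv A g `&` ultra_rdiv A p)) /\
     (exists L : R,
        (fun g : G => density Phi (rdiv A g `&` ultra_rdiv A p)) @ p --> L /\ 0 < L)) ->
  exists B C : set G,
    infinite_set B /\ infinite_set C /\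
    [set (b * c)%g | b in B & c in C] `<=` A.
Proof.
move=> _ _ [Phi [p [[Phi0 [Hr _]] [pU [pnp [Hex [L [HL L0]]]]]]]].
have [q [qU qoo]] := @ultraFilterLemma nat eventually eventually_filter.
have Hbig : forall r : R, q [set N | r < (#|` Phi N|)%:R].
  by move=> r; apply: qoo; exact: (Phi_big pU pnp Phi0 Hr r).
apply: (final Phi0 pU pnp qU Hbig).
exact: (base Phi0 pU qU qoo Hex HL L0).
Qed.
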